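(* Let $k\in\mathbb{R}$ and $\epsilon\in(0,1)$. There exists a polynomial $p_{\mathrm{gauss},k,n}$ of degree $$n=\left\lceil\sqrt{8\left\lceil\max\{\ln(2/\epsilon),\,k^2e^2/2\}\right\rceil\ln(4/\epsilon)}\right\rceil$$ such that $\max_{x\in[-1,1]}\left|p_{\mathrm{gauss},k,n}(x)-e^{-(kx)^2}\right|\le\epsilon$. *)

(* Defs.v *)
From HB Require Import structures.
From mathcomp Require Import all_boot all_order all_algebra.
From mathcomp Require Import all_classical all_reals all_analysis.
Set Implicit Arguments. Unset Strict Implicit. Unset Printing Implicit Defensive.
Import Order.TTheory GRing.Theory Num.Theory.
Local Open Scope ring_scope.

(* n = ceil( sqrt( 8 * ceil(max(ln(2/eps), k^2 e^2 / 2)) * ln(4/eps) ) ),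
   as a natural number (the outer ceiling is nonnegative). *)
Definition gauss_deg (R : realType) (k eps : R) : nat :=
  `| Num.ceil (Num.sqrt
        (8 * (Num.ceil (Num.max (ln (2 / eps))
                                (k ^+ 2 * expR 1 ^+ 2 / 2)))%:~R
           * ln (4 / eps))) |%N.

(* Main.v *)
Require Import Defs.
From HB Require Import structures.
From mathcomp Require Import all_boot all_order all_algebra.
From mathcomp Require Import all_classical all_reals all_analysis.
From mathcomp Require Import zify ring lra.
Import Order.TTheory GRing.Theory Num.Theory numFieldNormedType.Exports.
Local Open Scope classical_set_scope.
Local Open Scope ring_scope.

Section S.
Variable R : realType.
Implicit Types x u : R.

Lemma sum_le_expR x N : 0 <= x -> \sum_(0 <= i < N) exp_coeff x i <= expR x.
Proof.
move=> x0; rewrite /expR.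
have := @nondecreasing_cvgn_le _ (series (exp_coeff x)).
apply => //.
  by apply: nondecreasing_series => n _ _; exact: exp_coeff_ge0.
exact: is_cvg_series_exp_coeff.
Qed.

Lemma exp_tail u b C : (forall N, (b <= N)%N -> `|\sum_(b <= i < N) exp_coeff u i| <= C) ->
  `|expR u - \sum_(0 <= i < b) exp_coeff u i| <= C.
Proof.
move=> H.
rewrite /expR.
have cv := is_cvg_series_exp_coeff u.
set S := \sum_(0 <= i < b) exp_coeff u i.
have cv2 : `|series (exp_coeff u) N - S| @[N --> \oo] --> `|limn (series (exp_coeff u)) - S|.
  apply: cvg_norm; apply: cvgB => //; exact: cvg_cst.
apply: (cvgr_to_le cv2).
near=> N.
have bN : (b <= N)%N by near: N; exists b.
rewrite /= /series /= (@big_cat_nat _ _ _ b) //= -/S addrAC subrr add0r.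
exact: H.
Unshelve. all: by end_near.
Qed.

Lemma fact_double m : (2 ^ m * m`! <= (m.*2)`!)%N.
Proof.
elim: m => // m IH.
rewrite doubleS !factS expnS.
move: IH; set P := (2 ^ m)%N; set F := m`!; set G := (m.*2)`! => IH.
have h : (P * F * ((m.*2).+2 * (m.*2).+1) <= G * ((m.*2).+2 * (m.*2).+1))%N by rewrite leq_mul2r IH orbT.
nia.
Qed.

Lemma coshf_ge0 x i : 0 <= exp_coeff x i + exp_coeff (- x) i.
Proof.
rewrite /exp_coeff /= -mulrDl; apply: divr_ge0 => //.
rewrite -(odd_double_half i); case: (odd i) => /=.
  by rewrite -!mul2n !exprS !exprM sqrrN mulNr addrN.
by rewrite add0n -!mul2n !exprM sqrrN -mulr2n mulrn_wge0 // exprn_ge0 // sqr_ge0.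
Qed.

Lemma coshf_even x m : exp_coeff x (m.*2) + exp_coeff (- x) (m.*2) = 2 * ((x ^+ 2) ^+ m / (m.*2)`!%:R).
Proof.
rewrite /exp_coeff /= -mulrDl -!mul2n !exprM sqrrN; ring.
Qed.

Lemma coshf_odd x m : exp_coeff x (m.*2).+1 + exp_coeff (- x) (m.*2).+1 = 0.
Proof.
rewrite /exp_coeff /= -mulrDl !exprS -!mul2n !exprM sqrrN mulNr addrN mul0r //.
Qed.

Lemma cosh_le x : expR x + expR (- x) <= 2 * expR (x ^+ 2 / 2).
Proof.
rewrite /expR.
have cv : series (exp_coeff x) N + series (exp_coeff (- x)) N @[N --> \oo] -->
   limn (series (exp_coeff x)) + limn (series (exp_coeff (-x))).
  by apply: cvgD; exact: is_cvg_series_exp_coeff.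
apply: (cvgr_to_le cv); near=> N.
rewrite /series /= -big_split /=.
have e2 : forall M, \sum_(0 <= i < M.*2) (exp_coeff x i + exp_coeff (- x) i)
   = \sum_(0 <= m < M) 2 * ((x ^+ 2) ^+ m / (m.*2)`!%:R).
  elim=> [|M IH]; first by rewrite !big_geq.
  by rewrite doubleS !big_nat_recr //= IH coshf_odd addr0 coshf_even.
apply: (@le_trans _ _ (\sum_(0 <= i < N.*2) (exp_coeff x i + exp_coeff (- x) i))).
  rewrite [leRHS](@big_cat_nat _ _ _ N) //=; last by rewrite -addnn leq_addr.
  rewrite lerDl; apply: sumr_ge0 => i _; exact: coshf_ge0.
rewrite e2 -mulr_sumr ler_pM2l //.
apply: (@le_trans _ _ (\sum_(0<=i<N) exp_coeff (x^+2/2) i)); last first.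
  by apply: sum_le_expR; rewrite divr_ge0 // sqr_ge0.
apply: ler_sum => m _; rewrite /exp_coeff /= expr_div_n -mulrA ler_wpM2l //; last first.
  rewrite -invfM -natrX -natrM lef_pV2 ?posrE ?ltr0n ?fact_gt0 ?muln_gt0 ?expn_gt0 ?fact_gt0 //.
  by rewrite ler_nat fact_double.
by rewrite exprn_ge0 // sqr_ge0.
Unshelve. all: by end_near.
Qed.

Lemma binom_exp (i : nat) (mu : R) :
  \sum_(j < i.+1) 'C(i, j)%:R * expR (mu * (i%:R - 2 * j%:R)) = (expR mu + expR (- mu)) ^+ i.
Proof.
rewrite exprDn; apply: eq_bigr => j _.
have ji : (j <= i)%N by rewrite -ltnS.
rewrite -[RHS]mulr_natl; congr (_ * _).
rewrite -!expRM_natl -expRD; congr expR.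
rewrite natrB //; ring.
Qed.

Lemma chernoff (i : nat) (D : R) : (0 < i)%N -> 0 <= D ->
  \sum_(j < i.+1 | D < `|i%:R - 2 * j%:R|) 'C(i, j)%:R <= 2 * 2 ^+ i * expR (- (D ^+ 2) / (2 * i%:R)).
Proof.
move=> i0 D0.
set mu := D / i%:R.
have mu0 : 0 <= mu by rewrite divr_ge0.
have i0R : 0 < i%:R :> R by rewrite ltr0n.
apply: (@le_trans _ _ (\sum_(j < i.+1) 'C(i, j)%:R * (expR (mu * (i%:R - 2 * j%:R)) + expR ((- mu) * (i%:R - 2 * j%:R))) * expR (- (mu * D)))).
  rewrite big_mkcond /=; apply: ler_sum => j _.
  case: ifP => hb; last by rewrite !mulr_ge0 // ?addr_ge0 // expR_ge0.
  rewrite -mulrA ler_peMr // mulrDl -!expRD.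
  set e := (i%:R - 2 * j%:R) in hb *.
  have [e0|e0] := leP 0 e.
    rewrite ger0_norm // in hb.
    rewrite -[1]addr0; apply: lerD; last exact: expR_ge0.
    rewrite -expR0 ler_expR subr_ge0 ler_wpM2l // ltW //.
  rewrite ltr0_norm // in hb.
  rewrite -[1]add0r; apply: lerD; first exact: expR_ge0.
  rewrite -expR0 ler_expR subr_ge0 mulNr -mulrN ler_wpM2l // ltW //.
rewrite -mulr_suml.
under eq_bigr do rewrite mulrDr.
rewrite big_split /= binom_exp (binom_exp i (- mu)) opprK [expR (- mu) + _]addrC.
have hc := cosh_le mu.
apply: (@le_trans _ _ (2 * (2 * expR (mu ^+ 2 / 2)) ^+ i * expR (- (mu * D)))).
  have e2 : forall z : R, z + z = 2 * z by move=> z; ring.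
  rewrite e2 ler_wpM2r ?expR_ge0 // ler_wpM2l //.
  apply: lerXn2r => //; rewrite ?nnegrE ?addr_ge0 ?mulr_ge0 ?expR_ge0 //.
rewrite exprMn -!mulrA ler_wpM2l // ler_wpM2l ?exprn_ge0 //.
rewrite -expRM_natl -expRD ler_expR /mu.
rewrite le_eqVlt; apply/orP; left; apply/eqP.
have ine : i%:R != 0 :> R by rewrite pnatr_eq0 -lt0n.
by field.
Qed.

Fixpoint cheb2 (m : nat) : {poly R} * {poly R} :=
  if m is m'.+1 then let p := cheb2 m' in (p.2, 'X * p.2 *+ 2 - p.1) else (1, 'X).
Definition cheb m := (cheb2 m).1.

Lemma cheb0 : cheb 0 = 1. Proof. by []. Qed.
Lemma cheb1 : cheb 1 = 'X. Proof. by []. Qed.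
Lemma chebSS m : cheb m.+2 = 'X * cheb m.+1 *+ 2 - cheb m.
Proof. by []. Qed.

Lemma size_cheb m : (size (cheb m) <= m.+1)%N.
Proof.
suff : (size (cheb m) <= m.+1)%N /\ (size (cheb m.+1) <= m.+2)%N by case.
elim: m => [|m [IH1 IH2]]; first by rewrite cheb0 cheb1 size_poly1 size_polyX.
split => //; rewrite chebSS.
apply: (leq_trans (size_add _ _)); rewrite size_polyN geq_max; apply/andP; split; last first.
  by apply: (leq_trans IH1); lia.
rewrite mulr2n; apply: (leq_trans (size_polyD _ _)); rewrite maxnn.
apply: (leq_trans (size_polyMleq _ _)); rewrite size_polyX.
by rewrite add2n /=.
Qed.

Lemma cos_prod (a t : R) : cos a * cos t = (cos (a + t) + cos (a - t)) / 2.
Proof. by rewrite cosD cosB; field. Qed.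

Lemma cheb_cos m (t : R) : (cheb m).[cos t] = cos (m%:R * t).
Proof.
suff : (cheb m).[cos t] = cos (m%:R * t) /\ (cheb m.+1).[cos t] = cos (m.+1%:R * t) by case.
elim: m => [|m [IH1 IH2]]; first by rewrite cheb0 cheb1 hornerC hornerX mul0r cos0 mul1r.
split => //; rewrite chebSS hornerD hornerN hornerMn hornerM hornerX IH1 IH2.
rewrite mulrC cos_prod.
have -> : m.+1%:R * t - t = m%:R * t by rewrite -addn1 natrD; ring.
have -> : m.+1%:R * t + t = m.+2%:R * t by rewrite -(addn1 m.+1) natrD; ring.
by rewrite -mulr_natr; field.
Qed.

Lemma pascal (F : nat -> R) i :
  \sum_(0 <= j < i.+2) 'C(i.+1, j)%:R * F j = \sum_(0 <= j < i.+1) 'C(i, j)%:R * (F j + F j.+1).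
Proof.
under [RHS]eq_bigr do rewrite mulrDr.
rewrite big_split /= big_nat_recl // bin0 mul1r.
under eq_bigr do rewrite binS natrD mulrDl.
rewrite big_split /=.
have h1 : \sum_(0 <= j < i.+1) 'C(i, j)%:R * F j = F 0%N + \sum_(0 <= j < i) 'C(i, j.+1)%:R * F j.+1.
  by rewrite big_nat_recl // bin0 mul1r.
have h2 : \sum_(0 <= j < i.+1) 'C(i, j.+1)%:R * F j.+1 = \sum_(0 <= j < i) 'C(i, j.+1)%:R * F j.+1.
  by rewrite big_nat_recr //= bin_small // mul0r addr0.
rewrite h1 h2; ring.
Qed.

Lemma cos_pow (t : R) i : cos t ^+ i =
  (2 ^+ i)^-1 * \sum_(0 <= j < i.+1) 'C(i, j)%:R * cos ((i%:R - 2 * j%:R) * t).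
Proof.
elim: i => [|i IH].
  by rewrite big_nat1 expr0 invr1 !mul1r mulr0 subr0 mul0r cos0.
rewrite exprS IH pascal exprS invfM mulrCA [2^-1 / _]mulrC -mulrA; congr (_ * _); rewrite !mulr_sumr.
rewrite big_nat_cond [RHS]big_nat_cond.
apply: eq_bigr => j _.
rewrite mulrCA (mulrC (cos t)) cos_prod.
have -> : (i%:R - 2 * j%:R) * t + t = (i.+1%:R - 2 * j%:R) * t by rewrite -addn1 natrD; ring.
have -> : (i%:R - 2 * j%:R) * t - t = (i.+1%:R - 2 * j.+1%:R) * t.
  by rewrite -addn1 natrD -(addn1 j) natrD; ring.
ring.
Qed.

Lemma onep_pow_le i : (0 < i)%N -> (1 + i%:R^-1) ^+ i <= expR 1 :> R.
Proof.
move=> i0.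
apply: (@le_trans _ _ (expR (i%:R^-1) ^+ i)).
  apply: lerXn2r; rewrite ?nnegrE ?addr_ge0 ?expR_ge0 ?invr_ge0 //.
  exact: expR_ge1Dx.
rewrite -expRM_natl mulfV // pnatr_eq0 -lt0n //.
Qed.

Lemma fact_lb i : (0 < i)%N -> (i%:R / expR 1) ^+ i * expR 1 <= i`!%:R :> R.
Proof.
have e0 : 0 < expR 1 :> R by exact: expR_gt0.
elim: i => [//|i IH] _.
case: i IH => [|i] IH.
  by rewrite expr1 mulfVK ?gt_eqF // fact0 mul1n.
have {}IH := IH isT.
rewrite factS natrM.
set m := i.+1 in IH *.
have m0 : 0 < m%:R :> R by rewrite ltr0n.
have h1 : (m.+1%:R / expR 1 : R) ^+ m <= expR 1 * (m%:R / expR 1) ^+ m.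
  have -> : m.+1%:R / expR 1 = (m%:R / expR 1) * (1 + m%:R^-1) :> R.
    by rewrite -addn1 natrD; field; rewrite !gt_eqF.
  rewrite exprMn mulrC; apply: ler_wpM2r; first by rewrite exprn_ge0 // divr_ge0 // ltW.
  exact: onep_pow_le.
rewrite exprS -mulrA.
apply: (@le_trans _ _ (m.+1%:R / expR 1 * (expR 1 * (m%:R / expR 1) ^+ m * expR 1))).
  apply: ler_wpM2l; first by rewrite divr_ge0 // ltW.
  by apply: ler_wpM2r => //; rewrite ltW.
apply: (@le_trans _ _ (m.+1%:R * ((m%:R / expR 1) ^+ m * expR 1))).
  by rewrite le_eqVlt; apply/orP; left; apply/eqP; field; rewrite gt_eqF.
by apply: ler_wpM2l.
Qed.

Lemma term_bound (lam : R) i : 0 <= lam -> (0 < i)%N -> lam * expR 1 ^+ 2 <= i%:R ->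
  lam ^+ i / i`!%:R <= expR (-1) ^+ i.+1.
Proof.
move=> l0 i0 hl.
have e0 : 0 < expR 1 :> R by exact: expR_gt0.
have f0 : 0 < i`!%:R :> R by rewrite ltr0n fact_gt0.
rewrite ler_pdivrMr //.
apply: (@le_trans _ _ (expR (-1) ^+ i.+1 * ((i%:R / expR 1) ^+ i * expR 1))); last first.
  by apply: ler_wpM2l; [rewrite exprn_ge0 // expR_ge0 | exact: fact_lb].
have -> : expR (-1) ^+ i.+1 * ((i%:R / expR 1) ^+ i * expR 1) = (i%:R / (expR 1 * expR 1)) ^+ i :> R.
  rewrite expRN !expr_div_n exprS exprMn exprVn.
  by field; rewrite ?expf_neq0 ?gt_eqF.
apply: lerXn2r; [by rewrite nnegrE | by rewrite nnegrE divr_ge0 // mulr_ge0 // ltW |].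
by rewrite ler_pdivlMr ?mulr_gt0 // -expr2.
Qed.

Lemma geom_tel (q : R) c m : (1 - q) * \sum_(0 <= i < m) q ^+ (c + i) = q ^+ c - q ^+ (c + m).
Proof.
elim: m => [|m IH]; first by rewrite big_geq // mulr0 addn0 subrr.
rewrite big_nat_recr //= mulrDr IH addnS exprS.
rewrite [q * _]mulrC; ring.
Qed.

Lemma tail_geom b N : (b <= N)%N ->
  \sum_(b <= i < N) expR (-1) ^+ i.+1 <= expR (- b%:R) :> R.
Proof.
move=> bN.
set q := expR (-1) : R.
have q0 : 0 < q by exact: expR_gt0.
have q1 : q < 1 by rewrite /q expR_lt1 ltrN10.
have e2 : 2 <= expR 1 :> R by have := expR_ge1Dx (1 : R); rewrite -[1 + 1]/(2%:R).
have hq : q <= 2^-1.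
  rewrite /q expRN lef_pV2 ?posrE ?expR_gt0 //.
have -> : \sum_(b <= i < N) q ^+ i.+1 = \sum_(0 <= i < N - b) q ^+ (b.+1 + i).
  rewrite -{1}(add0n b) big_addn.
  by apply: eq_bigr => i _; rewrite addSn addnC.
have -> : expR (- b%:R) = q ^+ b by rewrite -expRM_natl mulrN1.
have h := geom_tel q b.+1 (N - b).
have s0 : 0 <= \sum_(0 <= i < N - b) q ^+ (b.+1 + i) by apply: sumr_ge0 => i _; rewrite exprn_ge0 // ltW.
have qb0 : 0 <= q ^+ b by rewrite exprn_ge0 // ltW.
have : (1 - q) * \sum_(0 <= i < N - b) q ^+ (b.+1 + i) <= q ^+ b.+1.
  by rewrite h gerBl exprn_ge0 // ltW.
rewrite exprS => H.
nra.
Qed.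

Definition dd (i j : nat) := (i - 2 * j + (2 * j - i))%N.

Lemma dd_real i j : (dd i j)%:R = `|i%:R - 2 * j%:R| :> R.
Proof.
rewrite /dd; have [h|h] := leqP (2 * j) i.
  have -> : (2 * j - i = 0)%N by apply/eqP; rewrite subn_eq0.
  rewrite addn0 natrB // natrM ger0_norm; first done.
  by rewrite subr_ge0 -natrM ler_nat; exact: h.
have -> : (i - 2 * j = 0)%N by apply/eqP; rewrite subn_eq0 ltnW.
rewrite add0n natrB; last exact: ltnW.
rewrite natrM ltr0_norm; first by rewrite opprB.
by rewrite subr_lt0 -natrM ltr_nat; exact: h.
Qed.

Lemma cos_dd i j (t : R) : cos ((i%:R - 2 * j%:R) * t) = cos ((dd i j)%:R * t).
Proof.
rewrite dd_real; set e := (i%:R - 2 * j%:R).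
have [e0|e0] := leP 0 e; first by rewrite ger0_norm.
by rewrite ltr0_norm // mulNr cosN.
Qed.
End S.

Theorem lemma9 (R : realType) (k eps : R) (heps0 : 0 < eps) (heps1 : eps < 1) :
  exists p : {poly R},
    (size p <= (gauss_deg k eps).+1)%N /\
    (forall x : R, -1 <= x <= 1 -> `| p.[x] - expR (- (k * x) ^+ 2) | <= eps).
Proof.
rewrite /gauss_deg.
set lam := k ^+ 2 / 2.
set L2 := ln (2 / eps).
set L4 := ln (4 / eps).
set bZ := Num.ceil (Num.max L2 (k ^+ 2 * expR 1 ^+ 2 / 2)).
set n := `|Num.ceil (Num.sqrt (8 * bZ%:~R * L4))|%N.
set b := `|bZ|%N.
have L2pos : 0 < L2 by apply: ln_gt0; rewrite ltr_pdivlMr // mul1r; lra.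
have L4pos : 0 < L4 by apply: ln_gt0; rewrite ltr_pdivlMr // mul1r; lra.
have hbZ : Num.max L2 (k ^+ 2 * expR 1 ^+ 2 / 2) <= bZ%:~R by exact: ceil_ge.
have m1 : L2 <= Num.max L2 (k ^+ 2 * expR 1 ^+ 2 / 2) by rewrite le_max lexx.
have m2 : k ^+ 2 * expR 1 ^+ 2 / 2 <= Num.max L2 (k ^+ 2 * expR 1 ^+ 2 / 2) by rewrite le_max lexx orbT.
have bZ0 : 0 <= bZ.
  rewrite /bZ ceil_ge0; apply: (lt_le_trans _ m1); lra.
have bR : b%:R = bZ%:~R :> R by rewrite /b natr_absz ger0_norm.
have hL2b : L2 <= b%:R by rewrite bR; exact: le_trans m1 hbZ.
have hlb : lam * expR 1 ^+ 2 <= b%:R.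
  have -> : lam * expR 1 ^+ 2 = k ^+ 2 * expR 1 ^+ 2 / 2 by rewrite /lam; ring.
  by rewrite bR; exact: le_trans m2 hbZ.
have b1 : (0 < b)%N by rewrite -(ltr0n R); exact: lt_le_trans L2pos hL2b.
have he2 : expR (- L2) = eps / 2.
  by rewrite expRN lnK ?posrE ?divr_gt0 // invf_div.
have he4 : expR (- L4) = eps / 4.
  by rewrite expRN lnK ?posrE ?divr_gt0 // invf_div.
have heb : expR (- b%:R) <= eps / 2 by rewrite -he2 ler_expR lerN2.
have hn : 8 * b%:R * L4 <= n%:R ^+ 2.
  set s := Num.sqrt (8 * bZ%:~R * L4) in n *.
  have s0 : 0 <= s by exact: sqrtr_ge0.
  have hs : s ^+ 2 = 8 * b%:R * L4.
    rewrite /s sqr_sqrtr ?bR //.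
    by apply: mulr_ge0; [apply: mulr_ge0 => //; rewrite ler0z | exact: ltW].
  have cs : s <= (Num.ceil s)%:~R by exact: ceil_ge.
  have c0 : 0 <= Num.ceil s by rewrite ceil_ge0; lra.
  have nR : n%:R = (Num.ceil s)%:~R :> R by rewrite /n natr_absz ger0_norm.
  by rewrite -hs nR; apply: lerXn2r; rewrite ?nnegrE //; exact: le_trans cs.
pose Q i := \sum_(0 <= j < i.+1 | (2 * dd i j <= n)%N) ((2 ^+ i)^-1 * 'C(i, j)%:R) *: cheb R (2 * dd i j).
pose c i := expR (- lam) * (- lam) ^+ i / i`!%:R.
have sizeD : forall p q : {poly R}, (size p <= n.+1)%N -> (size q <= n.+1)%N -> (size (p + q)%R <= n.+1)%N.
  by move=> p q hp hq; apply: (leq_trans (size_polyD _ _)); rewrite geq_max hp hq.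
exists (\sum_(0 <= i < b) c i *: Q i); split.
  apply: (big_ind (fun p : {poly R} => (size p <= n.+1)%N)); [by rewrite size_poly0 | exact: sizeD | ].
  move=> i _; apply: (leq_trans (size_scale_leq _ _)).
  apply: (big_ind (fun p : {poly R} => (size p <= n.+1)%N)); [by rewrite size_poly0 | exact: sizeD | ].
  move=> j hj; apply: (leq_trans (size_scale_leq _ _)); apply: (leq_trans (size_cheb _ _)).
  by rewrite ltnS.
move=> x hx.
have hc : cos (acos x) = x by have [] := acos_def hx.
set th := acos x in hc.
set w := 2 * x ^+ 2 - 1.
have hw : w = cos (th + th) by rewrite cosD -!expr2 sin2cos2 /w hc; ring.
have hw1 : `|w| <= 1 by rewrite hw ler_norml cos_geN1 cos_le1.
have lam0 : 0 <= lam by rewrite /lam divr_ge0 // sqr_ge0.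
set u := - lam * w.
have hu : `|u| <= lam.
  by rewrite /u normrM normrN (ger0_norm lam0); apply: ler_piMr.
have hexp : expR (- (k * x) ^+ 2) = expR (- lam) * expR u.
  by rewrite -expRD /u /w /lam; congr expR; field.
have hQ : forall i, (i < b)%N -> `|(Q i).[x] - w ^+ i| <= eps / 2.
  move=> i hi.
  pose G j := 'C(i, j)%:R * cos ((2 * dd i j)%:R * th).
  have eQ : (Q i).[x] = (2 ^+ i)^-1 * \sum_(0 <= j < i.+1 | (2 * dd i j <= n)%N) G j.
    rewrite -hc horner_sum mulr_sumr; apply: eq_bigr => j _.
    by rewrite hornerZ cheb_cos mulrA.
  have ew : w ^+ i = (2 ^+ i)^-1 * \sum_(0 <= j < i.+1) G j.
    rewrite hw cos_pow; congr (_ * _); apply: eq_bigr => j _.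
    by rewrite /G cos_dd natrM; congr (_ * cos _); ring.
  have spl : \sum_(0 <= j < i.+1) G j = \sum_(0 <= j < i.+1 | (2 * dd i j <= n)%N) G j
     + \sum_(0 <= j < i.+1 | ~~ (2 * dd i j <= n)%N) G j.
    by rewrite (bigID (fun j => (2 * dd i j <= n)%N)).
  rewrite eQ ew spl mulrDr opprD addrA subrr add0r.
  rewrite normrN normrM ger0_norm ?invr_ge0 ?exprn_ge0 //.
  apply: (@le_trans _ _ ((2 ^+ i)^-1 * \sum_(0 <= j < i.+1 | ~~ (2 * dd i j <= n)%N) 'C(i, j)%:R)).
    apply: ler_wpM2l; first by rewrite invr_ge0 exprn_ge0.
    apply: le_trans (ler_norm_sum _ _ _) _; apply: ler_sum => j _.
    rewrite /G normrM ger0_norm ?ler0n //.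
    by apply: ler_piMr; [exact: ler0n | rewrite ler_norml cos_geN1 cos_le1].
  case: i hi {eQ ew spl G} => [|i] hi.
    rewrite big_mkcond big_nat1 (_ : dd 0 0 = 0%N) // muln0 leq0n /= mulr0.
    by rewrite divr_ge0 // ltW.
  have hb : \sum_(0 <= j < i.+2 | ~~ (2 * dd i.+1 j <= n)%N) ('C(i.+1, j)%:R : R) =
      \sum_(j < i.+2 | (n%:R / 2 : R) < `|i.+1%:R - 2 * j%:R|) ('C(i.+1, j)%:R : R).
    rewrite big_mkord; apply: eq_bigl => j.
    by rewrite -dd_real -ltnNge ltr_pdivrMr // -natrM ltr_nat mulnC.
  rewrite hb.
  have D0 : 0 <= n%:R / 2 :> R by rewrite divr_ge0.
  have hch := @chernoff R i.+1 (n%:R / 2) (ltn0Sn i) D0.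
  apply: (le_trans (ler_wpM2l _ hch)); first by rewrite invr_ge0 exprn_ge0.
  have m0 : 0 < i.+1%:R :> R by rewrite ltr0n.
  have -> : (2 ^+ i.+1)^-1 * (2 * 2 ^+ i.+1 * expR (- (n%:R / 2) ^+ 2 / (2 * i.+1%:R))) =
      2 * expR (- (n%:R / 2) ^+ 2 / (2 * i.+1%:R)) :> R.
    by field; rewrite expf_neq0.
  have hm : i.+1%:R <= b%:R :> R by rewrite ler_nat ltnW.
  have h8 : 8 * i.+1%:R * L4 <= n%:R ^+ 2.
    apply: le_trans hn; apply: ler_wpM2r; first exact: ltW.
    by apply: ler_wpM2l.
  have hE : expR (- (n%:R / 2) ^+ 2 / (2 * i.+1%:R)) <= eps / 4.
    rewrite -he4 ler_expR mulNr lerN2 ler_pdivlMr ?mulr_gt0 // expr_div_n.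
    rewrite ler_pdivlMr ?exprn_gt0 //; nra.
  lra.
set S := \sum_(0 <= i < b) exp_coeff u i.
have hPA : (\sum_(0 <= i < b) c i *: Q i).[x] - expR (- lam) * S =
    \sum_(0 <= i < b) c i * ((Q i).[x] - w ^+ i).
  rewrite horner_sum /S mulr_sumr -sumrB; apply: eq_bigr => i _.
  by rewrite hornerZ /c /exp_coeff /u /= exprMn; ring.
have B1 : `|(\sum_(0 <= i < b) c i *: Q i).[x] - expR (- lam) * S| <= eps / 2.
  rewrite hPA; apply: le_trans (ler_norm_sum _ _ _) _.
  apply: (@le_trans _ _ (\sum_(0 <= i < b) expR (- lam) * exp_coeff lam i * (eps / 2))).
    apply: ler_sum_nat => i hi; rewrite normrM; apply: ler_pM => //.
      rewrite /c /exp_coeff /= normrM normrM normrX normrN ger0_norm ?expR_ge0 //.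
      rewrite (ger0_norm lam0) ger0_norm; first by rewrite mulrA.
      by rewrite invr_ge0 ler0n.
    by apply: hQ; case/andP: hi.
  rewrite -mulr_suml -mulr_sumr ler_piMl //; first by rewrite divr_ge0 // ltW.
  apply: (@le_trans _ _ (expR (- lam) * expR lam)).
    by apply: ler_wpM2l; [exact: expR_ge0 | exact: sum_le_expR].
  by rewrite mulrC expRxMexpNx_1.
have B2 : `|expR (- lam) * S - expR (- lam) * expR u| <= eps / 2.
  rewrite -mulrBr normrM ger0_norm ?expR_ge0 // distrC.
  apply: (@le_trans _ _ `|expR u - S|).
    by apply: ler_piMl; rewrite ?normr_ge0 // expR_le1 oppr_le0.
  apply: exp_tail => N bN.
  apply: le_trans (ler_norm_sum _ _ _) _.
  apply: (@le_trans _ _ (\sum_(b <= i < N) expR (-1) ^+ i.+1)); last exact: le_trans (@tail_geom R b N bN) heb.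
  apply: ler_sum_nat => i /andP [hbi hiN].
  apply: (@le_trans _ _ (exp_coeff lam i)).
    rewrite /exp_coeff /= normrM normrX (ger0_norm (_ : 0 <= i`!%:R^-1)); last by rewrite invr_ge0 ler0n.
    by apply: ler_wpM2r; [rewrite invr_ge0 ler0n | apply: lerXn2r; rewrite ?nnegrE ?normr_ge0].
  apply: term_bound => //; first exact: leq_trans b1 hbi.
  by apply: le_trans hlb _; rewrite ler_nat.
rewrite hexp.
have -> : (\sum_(0 <= i < b) c i *: Q i).[x] - expR (- lam) * expR u =
   ((\sum_(0 <= i < b) c i *: Q i).[x] - expR (- lam) * S) + (expR (- lam) * S - expR (- lam) * expR u).
  by rewrite addrA subrK.
apply: le_trans (ler_normD _ _) _.
by apply: le_trans (lerD B1 B2) _; rewrite -splitr.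
Qed.
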